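(* For every $n\ge1$, the smallest size $C(n)$ of a banded asymmetric covering $\mathcal{D}(n,1)$ is $$C(n)=\sum_{i=0}^{\lfloor n/2\rfloor}C(n+1,\,n+1-2i,\,n-2i).$$
   Context: An asymmetric covering $\mathcal{D}(n,1)$ is a set $\mathcal{D}\subseteq\mathbb{F}_2^n$ such that every $v\in\mathbb{F}_2^n$ either lies in $\mathcal{D}$ or is covered by (has support contained in the support of) some $u\in\mathcal{D}$ with $\mathrm{wt}(u)=\mathrm{wt}(v)+1$. It is banded if every $v$ of odd co-weight $n-\mathrm{wt}(v)$ is covered by some $u\in\mathcal{D}$ with $\mathrm{wt}(u)=\mathrm{wt}(v)+1$. $C(v,k,t)$ denotes the smallest size of a covering design $\mathcal{C}(v,k,t)$, i.e. a collection of $k$-subsets of a $v$-set such that every $t$-subset is contained in at least one of them. *)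

(* Defs.v *)
From mathcomp Require Import all_boot.
Set Implicit Arguments. Unset Strict Implicit. Unset Printing Implicit Defensive.

(* A vector v in F_2^n is represented by its support, a subset of 'I_n.
   wt v = #|v|; "u covers v" means supp v ⊆ supp u and wt u = wt v + 1. *)
Definition covers (n : nat) (u v : {set 'I_n}) : bool :=
  (v \subset u) && (#|u| == #|v|.+1).

Definition asym_covering (n : nat) (D : {set {set 'I_n}}) : bool :=
  [forall v : {set 'I_n}, (v \in D) || [exists u in D, covers u v]].

Definition banded (n : nat) (D : {set {set 'I_n}}) : bool :=
  [forall v : {set 'I_n}, odd (n - #|v|) ==> [exists u in D, covers u v]].

Definition banded_asym_covering (n : nat) (D : {set {set 'I_n}}) : bool :=
  asym_covering D && banded D.

Definition is_covering_design (v k t : nat) (B : {set {set 'I_v}}) : bool :=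
  [forall b in B, #|b| == k] &&
  [forall T : {set 'I_v}, (#|T| == t) ==> [exists b in B, T \subset b]].

(* smallest cardinality of a family satisfying P (0 if no such family) *)
Definition min_size (T : finType) (P : pred {set T}) : nat :=
  if [pick x | P x] is Some x0 then #|arg_min x0 P (fun x => #|x|)| else 0.

Definition Cband (n : nat) : nat := min_size (@banded_asym_covering n).

Definition covnum (v k t : nat) : nat := min_size (@is_covering_design v k t).

(* Main.v *)
Require Import Defs.
From mathcomp Require Import all_boot.
From mathcomp Require Import zify.

Set Implicit Arguments. Unset Strict Implicit. Unset Printing Implicit Defensive.

Definition minw (T : finType) (P : pred {set T}) : {set T} :=
  if [pick x | P x] is Some x0 then arg_min x0 P (fun x => #|x|) else set0.

Lemma min_size_le (T : finType) (P : pred {set T}) A : P A -> min_size P <= #|A|.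
Proof.
move=> PA; rewrite /min_size; case: pickP => [x0 Px0|/(_ A)]; last by rewrite PA.
by case: arg_minnP => // y Py Hmin; apply: Hmin.
Qed.

Lemma minw_spec (T : finType) (P : pred {set T}) A : P A ->
  P (minw P) /\ #|minw P| = min_size P.
Proof.
move=> PA; rewrite /min_size /minw; case: pickP => [x0 Px0|/(_ A)]; last by rewrite PA.
by case: arg_minnP.
Qed.

Definition E n (u : {set 'I_n}) : {set 'I_n.+1} := [set lift ord_max j | j in u].
Definition Pr n (b : {set 'I_n.+1}) : {set 'I_n} := [set j | lift ord_max j \in b].
Definition phi n (u : {set 'I_n}) : {set 'I_n.+1} :=
  if odd (n - #|u|) then E u else ord_max |: E u.
Definition lev n (u : {set 'I_n}) := (n - #|u|).+1./2.

Lemma cardE n (u : {set 'I_n}) : #|E u| = #|u|.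
Proof. exact: card_imset (@lift_inj _ ord_max). Qed.

Lemma PrE n (u : {set 'I_n}) : Pr (E u) = u.
Proof. by apply/setP => j; rewrite inE mem_imset //; apply: lift_inj. Qed.

Lemma maxE n (u : {set 'I_n}) : ord_max \notin E u.
Proof. by apply/imsetP => -[j _] /eqP; rewrite (negbTE (neq_lift _ _)). Qed.

Lemma PrU1 n (b : {set 'I_n.+1}) : Pr (ord_max |: b) = Pr b.
Proof.
apply/setP => j; rewrite !inE.
by rewrite eq_sym (negbTE (neq_lift _ _)).
Qed.

Lemma EPr n (b : {set 'I_n.+1}) : E (Pr b) = b :\ ord_max.
Proof.
apply/setP => k; rewrite !inE.
case: (unliftP ord_max k) => [j ->|->].
  rewrite mem_imset; last exact: lift_inj.
  by rewrite inE eq_sym neq_lift.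
by rewrite eqxx (negbTE (maxE _)).
Qed.

Lemma cardPr n (b : {set 'I_n.+1}) : #|Pr b| + (ord_max \in b) = #|b|.
Proof.
by rewrite -cardE EPr (cardsD1 ord_max b) addnC.
Qed.

Lemma PrS n (a b : {set 'I_n.+1}) : a \subset b -> Pr a \subset Pr b.
Proof. by move=> /subsetP H; apply/subsetP => j; rewrite !inE => /H. Qed.

Lemma ES n (u v : {set 'I_n}) : u \subset v -> E u \subset E v.
Proof. exact: imsetS. Qed.

Lemma card_le n (u : {set 'I_n}) : #|u| <= n.
Proof. by rewrite -[n in _ <= n]card_ord max_card. Qed.

Lemma max_phi n (u : {set 'I_n}) : (ord_max \in phi u) = ~~ odd (n - #|u|).
Proof.
rewrite /phi; case: ifP => _ /=; first by rewrite (negbTE (maxE _)).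
by rewrite setU11.
Qed.

Lemma phiK n (u : {set 'I_n}) : Pr (phi u) = u.
Proof. by rewrite /phi; case: ifP; rewrite ?PrU1 PrE. Qed.

Lemma phi_inj n : injective (@phi n).
Proof. exact: can_inj (@phiK n). Qed.

Lemma card_phi n (u : {set 'I_n}) : #|phi u| = n.+1 - 2 * lev u.
Proof.
have := card_le u; rewrite /lev /phi; case: ifP => Ho.
  rewrite cardE; move: Ho; move: #|u| => k; lia.
rewrite cardsU1 (negbTE (maxE u)) cardE; move: Ho; move: #|u| => k; lia.
Qed.

Lemma phiPr n (b : {set 'I_n.+1}) : ~~ odd (n.+1 - #|b|) -> 0 < #|b| ->
  phi (Pr b) = b.
Proof.
move=> He Hb; have := cardPr b; rewrite /phi.
case Hm: (ord_max \in b) => /= Hc.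
  rewrite addn1 in Hc.
  have -> : odd (n - #|Pr b|) = false by move: He Hc Hb; move: #|Pr b| #|b| => x y; lia.
  by rewrite EPr setD1K.
have Hle : #|b| <= n.
  have : b \subset [set~ ord_max].
    by apply/subsetP => k Hk; rewrite !inE; apply: contraFneq Hm => <-.
  by move/subset_leq_card; rewrite cardsC1 card_ord.
rewrite addn0 in Hc.
have -> : odd (n - #|Pr b|) = true by move: He Hc Hb Hle; move: #|Pr b| #|b| => x y; lia.
rewrite EPr; apply/setP => k; rewrite !inE.
by case: eqP => // ->; rewrite Hm.
Qed.

Lemma part (T : finType) (D : {set T}) (f : T -> nat) m :
  \sum_(0 <= i < m) #|[set u in D | f u == i]| = #|[set u in D | f u < m]|.
Proof.
elim: m => [|m IH].
  rewrite big_geq //; apply/esym/eqP; rewrite cards_eq0; apply/eqP/setP => u.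
  by rewrite !inE ltn0 andbF.
rewrite big_nat_recr //= IH.
have -> : [set u in D | f u < m.+1] =
  [set u in D | f u < m] :|: [set u in D | f u == m].
  by apply/setP => u; rewrite !inE ltnS leq_eqVlt; case: (u \in D); case: ltngtP.
rewrite cardsU; have -> : [set u in D | f u < m] :&: [set u in D | f u == m] = set0.
  by apply/setP => u; rewrite !inE; case: (f u == m) / eqP => [->|]; rewrite ?ltnn ?andbF.
by rewrite cards0 subn0.
Qed.

Lemma EPr_nm n (b : {set 'I_n.+1}) : ord_max \notin b -> E (Pr b) = b.
Proof.
move=> Hm; rewrite EPr; apply/setP => k; rewrite !inE.
by case: eqP => // ->; rewrite (negbTE Hm).
Qed.

Lemma EPr_m n (b : {set 'I_n.+1}) : ord_max |: E (Pr b) = ord_max |: b.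
Proof.
rewrite EPr; apply/setP => k; rewrite !inE.
by case: eqP.
Qed.

Lemma design_lower n (D : {set {set 'I_n}}) i : banded_asym_covering D -> 2 * i <= n ->
  @is_covering_design n.+1 (n.+1 - 2*i) (n - 2*i) (@phi n @: [set u in D | lev u == i]).
Proof.
case/andP => /forallP Has /forallP Hb Hi.
apply/andP; split.
  apply/forallP => b; apply/implyP => /imsetP [u]; rewrite inE => /andP[_ /eqP Hl] ->.
  by rewrite card_phi Hl.
apply/forallP => T; apply/implyP => /eqP HT.
have HcT := cardPr T.
have Hvle := card_le (Pr T).
case HmT: (ord_max \in T).
- rewrite HmT addn1 in HcT.
  have Hodd : odd (n - #|Pr T|) by move: HcT HT Hi Hvle; move: #|Pr T| #|T| => x y; lia.
  have /existsP [u /andP [uD /andP [svu /eqP cu]]] := implyP (Hb (Pr T)) Hodd.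
  have Hule := card_le u.
  apply/existsP; exists (phi u); apply/andP; split.
    apply: imset_f; rewrite inE uD /= /lev; apply/eqP.
    move: HcT HT Hi Hvle cu Hule; move: #|Pr T| #|T| #|u| => x y z; lia.
  rewrite /phi (_ : odd (n - #|u|) = false); last first.
    move: HcT HT Hi Hvle cu Hule; move: #|Pr T| #|T| #|u| => x y z; lia.
  have -> : T = ord_max |: T by apply/esym/setUidPr; rewrite sub1set.
  rewrite -EPr_m; apply: setUS; exact: ES.
- rewrite HmT addn0 in HcT.
  case/orP: (Has (Pr T)) => [vD|/existsP [u /andP [uD /andP [svu /eqP cu]]]].
    apply/existsP; exists (phi (Pr T)); apply/andP; split.
      apply: imset_f; rewrite inE vD /= /lev; apply/eqP.
      move: HcT HT Hi Hvle; move: #|Pr T| #|T| => x y; lia.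
    rewrite /phi (_ : odd (n - #|Pr T|) = false); last first.
      move: HcT HT Hi Hvle; move: #|Pr T| #|T| => x y; lia.
    by rewrite EPr_nm ?HmT // subsetUr.
  have Hule := card_le u.
  apply/existsP; exists (phi u); apply/andP; split.
    apply: imset_f; rewrite inE uD /= /lev; apply/eqP.
    move: HcT HT Hi Hvle cu Hule; move: #|Pr T| #|T| #|u| => x y z; lia.
  rewrite /phi (_ : odd (n - #|u|) = true); last first.
    move: HcT HT Hi Hvle cu Hule; move: #|Pr T| #|T| #|u| => x y z; lia.
  rewrite -(EPr_nm (negbT HmT)); exact: ES.
Qed.

Lemma lower n (D : {set {set 'I_n}}) : banded_asym_covering D ->
  \sum_(0 <= i < n./2.+1) covnum n.+1 (n.+1 - 2 * i) (n - 2 * i) <= #|D|.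
Proof.
move=> HD.
apply: (@leq_trans (\sum_(0 <= i < n./2.+1) #|[set u in D | lev u == i]|)).
  rewrite big_nat [X in _ <= X]big_nat; apply: leq_sum => i /andP [_ Hi].
  have H2 : 2 * i <= n by move: Hi; lia.
  apply: leq_trans (leq_imset_card (@phi n) _).
  exact: min_size_le (design_lower HD H2).
rewrite part; apply: subset_leq_card; apply/subsetP => u; rewrite inE; case/andP=> //.
Qed.

Lemma design_exists v k t : k = t.+1 -> t < v ->
  @is_covering_design v k t [set b : {set 'I_v} | #|b| == k].
Proof.
move=> -> Ht; apply/andP; split.
  by apply/forallP => b; apply/implyP; rewrite inE.
apply/forallP => T; apply/implyP => /eqP HT.
have : 0 < #|~: T| by rewrite cardsCs setCK card_ord HT subn_gt0.
case/card_gt0P => x; rewrite inE => Hx.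
apply/existsP; exists (x |: T); rewrite inE cardsU1 Hx HT /=.
by rewrite add1n eqxx subsetUr.
Qed.

Definition Bd n i : {set {set 'I_n.+1}} :=
  minw (@is_covering_design n.+1 (n.+1 - 2*i) (n - 2*i)).

Lemma Bd_spec n i : 2 * i <= n ->
  @is_covering_design n.+1 (n.+1 - 2*i) (n - 2*i) (Bd n i) /\
  #|Bd n i| = covnum n.+1 (n.+1 - 2*i) (n - 2*i).
Proof.
move=> Hi; apply: minw_spec; apply: design_exists; lia.
Qed.

Definition Dc n : {set {set 'I_n}} :=
  [set u : {set 'I_n} | (lev u <= n./2) && (phi u \in Bd n (lev u))].

Lemma Dc_key n (v : {set 'I_n}) : exists2 u, u \in Dc n &
  (v \subset u) && ((#|u| == #|v|.+1) || (~~ odd (n - #|v|) && (u == v))).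
Proof.
pose c := n - #|v|; pose i := c./2.
have Hvle := card_le v.
have Hi : 2 * i <= n by rewrite /i /c; lia.
have [/andP [/forallP Hsz /forallP Hcov] _] := Bd_spec Hi.
pose T := if odd c then ord_max |: E v else E v.
have HT : #|T| = n - 2 * i.
  rewrite /T /i /c; case: ifP => Ho.
    rewrite cardsU1 (negbTE (maxE v)) cardE; move: Ho Hvle; move: #|v| => x; lia.
  rewrite cardE; move: Ho Hvle; move: #|v| => x; lia.
have /existsP [b /andP [bB Tb]] := implyP (Hcov T) (introT eqP HT).
have /eqP Hb := implyP (Hsz b) bB.
have Hphi : phi (Pr b) = b.
  apply: phiPr; rewrite Hb; lia.
have Hcp := card_phi (Pr b); rewrite Hphi Hb in Hcp.
have Hul := card_le (Pr b).
have Hlev : lev (Pr b) = i.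
  move: Hcp Hi Hul; rewrite /lev; move: #|Pr b| => x; lia.
exists (Pr b).
  rewrite inE Hlev Hphi bB andbT /i /c; lia.
have svu : v \subset Pr b.
  rewrite -(PrE v); apply: PrS; apply: subset_trans Tb.
  by rewrite /T; case: ifP => _ //; rewrite subsetUr.
rewrite svu /=.
have Hcb := cardPr b; rewrite Hb in Hcb.
case Ho: (odd c).
  have Hmb : ord_max \in b.
    by apply: (subsetP Tb); rewrite /T Ho setU11.
  rewrite Hmb addn1 in Hcb; apply/orP; left; apply/eqP.
  move: Hcb Ho Hvle Hi Hul; rewrite /i /c; move: #|v| #|Pr b| => x y; lia.
case Hmb: (ord_max \in b) Hcb => Hcb.
  rewrite addn1 in Hcb; apply/orP; right.
  rewrite /= eq_sym eqEcard svu /=.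
  move: Hcb Ho Hvle Hi Hul; rewrite /i /c; move: #|v| #|Pr b| => x y; lia.
rewrite addn0 in Hcb; apply/orP; left; apply/eqP.
move: Hcb Ho Hvle Hi Hul; rewrite /i /c; move: #|v| #|Pr b| => x y; lia.
Qed.

Lemma Dc_ok n : banded_asym_covering (Dc n).
Proof.
apply/andP; split.
  apply/forallP => v; have [u uD /andP [svu /orP [/eqP cu|/andP [_ /eqP Huv]]]] := Dc_key v.
    by apply/orP; right; apply/existsP; exists u; rewrite uD /covers svu cu eqxx.
  by rewrite -Huv uD.
apply/forallP => v; apply/implyP => Ho.
have [u uD /andP [svu /orP [/eqP cu|/andP [H _]]]] := Dc_key v.
  by apply/existsP; exists u; rewrite uD /covers svu cu eqxx.
by rewrite Ho in H.
Qed.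

Lemma Dc_card n :
  #|Dc n| <= \sum_(0 <= i < n./2.+1) covnum n.+1 (n.+1 - 2 * i) (n - 2 * i).
Proof.
have -> : Dc n = [set u in Dc n | lev u < n./2.+1].
  apply/setP => u; rewrite !inE ltnS; case: (lev u <= n./2) => /=; by rewrite ?andbT ?andbF.
rewrite -(part _ (@lev n)) big_nat [X in _ <= X]big_nat; apply: leq_sum => i /andP [_ Hi].
have H2 : 2 * i <= n by move: Hi; lia.
have [_ <-] := Bd_spec H2.
rewrite -(card_imset _ (@phi_inj n)); apply: subset_leq_card.
apply/subsetP => b /imsetP [u]; rewrite !inE => /andP [/andP [_ H] /eqP Hl] ->.
by rewrite -Hl.
Qed.

Theorem corollary2 (n : nat) : 1 <= n ->
  Cband n = \sum_(0 <= i < n./2.+1) covnum n.+1 (n.+1 - 2 * i) (n - 2 * i).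
Proof.
move=> _; apply/eqP; rewrite eqn_leq; apply/andP; split.
  exact: leq_trans (min_size_le (Dc_ok n)) (Dc_card n).
rewrite /Cband; have [Hm <-] := minw_spec (Dc_ok n).
exact: lower Hm.
Qed.
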